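(* Let $l\ge2$ and $r\ge3$ be integers and let $\kappa$ be a real number with $3-l(1-\kappa)>0$. Let $n_2,\dots,n_l\ge0$ and $m_2,\dots,m_r\ge0$ be real numbers satisfying $$\sum_{s=2}^l s\,n_s=\sum_{t=2}^r t\,m_t\qquad\text{and}\qquad \sum_{t=2}^{r-1}m_t+\sum_{s=2}^l(l-s)n_s\ \ge\ \kappa l\sum_{s=2}^l n_s .$$ Then $$\sum_{t=2}^{r-1}(r-t)\,m_t\ \ge\ \Bigl(r-\frac{2+r}{3-l(1-\kappa)}\Bigr)\Bigl(\sum_{s=2}^l n_s+\sum_{t=2}^r m_t\Bigr).$$ *)

(* Defs.v *)
From Stdlib Require Import Reals Lra Lia List.
Open Scope R_scope.

(* sumR a b f = sum_{i=a}^{b} f i  (empty, i.e. 0, when b < a) *)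
Definition sumR (a b : nat) (f : nat -> R) : R :=
  fold_right Rplus 0 (map f (seq a (S b - a))).

(* Main.v *)
Require Import Defs.
From Stdlib Require Import Reals Lra Lia List Psatz.
Open Scope R_scope.

Lemma fold_map_ext (f g : nat -> R) (l : list nat) :
  (forall i, In i l -> f i = g i) ->
  fold_right Rplus 0 (map f l) = fold_right Rplus 0 (map g l).
Proof.
  induction l as [|x l IH]; simpl; intros H; auto.
  rewrite H by auto. rewrite IH; auto.
Qed.

Lemma fold_map_le (f g : nat -> R) (l : list nat) :
  (forall i, In i l -> f i <= g i) ->
  fold_right Rplus 0 (map f l) <= fold_right Rplus 0 (map g l).
Proof.
  induction l as [|x l IH]; simpl; intros H; [lra|].
  pose proof (H x (or_introl eq_refl)). pose proof (IH (fun i Hi => H i (or_intror Hi))). lra.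
Qed.

Lemma fold_map_lin (f g : nat -> R) (a b : R) (l : list nat) :
  fold_right Rplus 0 (map (fun i => a * f i + b * g i) l) =
  a * fold_right Rplus 0 (map f l) + b * fold_right Rplus 0 (map g l).
Proof. induction l as [|x l IH]; simpl; [ring|]. rewrite IH. ring. Qed.

Lemma in_range a b i : In i (seq a (S b - a)) -> (a <= i <= b)%nat.
Proof. rewrite in_seq. lia. Qed.

Lemma sumR_ext a b f g : (forall i, (a <= i <= b)%nat -> f i = g i) ->
  sumR a b f = sumR a b g.
Proof. intros H. unfold sumR. apply fold_map_ext. intros i Hi. apply H, in_range, Hi. Qed.

Lemma sumR_le a b f g : (forall i, (a <= i <= b)%nat -> f i <= g i) ->
  sumR a b f <= sumR a b g.
Proof. intros H. unfold sumR. apply fold_map_le. intros i Hi. apply H, in_range, Hi. Qed.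

Lemma sumR_lin a b f g x y :
  sumR a b (fun i => x * f i + y * g i) = x * sumR a b f + y * sumR a b g.
Proof. unfold sumR. apply fold_map_lin. Qed.

Lemma sumR_last a b f : (a <= S b)%nat -> sumR a (S b) f = sumR a b f + f (S b).
Proof.
  intros H. unfold sumR. replace (S (S b) - a)%nat with (S (S b - a)) by lia.
  rewrite seq_S, map_app, fold_right_app.
  replace (a + (S b - a))%nat with (S b) by lia.
  cbn [map fold_right]. rewrite Rplus_0_r.
  generalize (map f (seq a (S b - a))). intros l. induction l as [|x l IH]; simpl; [ring|].
  rewrite IH. ring.
Qed.

Lemma sumR_const0 a b f : (forall i, (a <= i <= b)%nat -> f i = 0) -> sumR a b f = 0.
Proof.
  intros H. transitivity (sumR a b (fun i => 0 * f i + 0 * f i)).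
  - apply sumR_ext. intros i Hi. rewrite H by auto. ring.
  - rewrite sumR_lin. ring.
Qed.

Theorem mainTheorem7 (l r : nat) (kappa : R) (n m : nat -> R) :
  (2 <= l)%nat -> (3 <= r)%nat ->
  3 - INR l * (1 - kappa) > 0 ->
  (forall s, (2 <= s <= l)%nat -> 0 <= n s) ->
  (forall t, (2 <= t <= r)%nat -> 0 <= m t) ->
  sumR 2 l (fun s => INR s * n s) = sumR 2 r (fun t => INR t * m t) ->
  sumR 2 (r - 1) m + sumR 2 l (fun s => (INR l - INR s) * n s)
    >= kappa * INR l * sumR 2 l n ->
  sumR 2 (r - 1) (fun t => (INR r - INR t) * m t)
    >= (INR r - (2 + INR r) / (3 - INR l * (1 - kappa)))
       * (sumR 2 l n + sumR 2 r m).
Proof.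
  intros Hl Hr HD Hn Hm HS Hc.
  set (D := 3 - INR l * (1 - kappa)) in *.
  set (N := sumR 2 l n).
  set (SS := sumR 2 l (fun s => INR s * n s)).
  set (M' := sumR 2 (r - 1) m).
  set (P := sumR 2 (r - 1) (fun t => INR t * m t)).
  set (mr := m r).
  assert (Er : r = Datatypes.S (r - 1)) by lia.
  assert (HM : sumR 2 r m = M' + mr).
  { unfold M', mr. rewrite Er at 1. rewrite sumR_last by lia. rewrite <- Er. ring. }
  assert (HSP : SS = P + INR r * mr).
  { unfold SS, P, mr. rewrite HS. rewrite Er at 1. rewrite sumR_last by lia. rewrite <- Er. ring. }
  assert (HL : sumR 2 (r - 1) (fun t => (INR r - INR t) * m t) = INR r * M' - P).
  { unfold M', P. transitivity (sumR 2 (r-1) (fun t => INR r * m t + -1 * (INR t * m t))).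
    - apply sumR_ext; intros; ring.
    - rewrite sumR_lin; ring. }
  assert (HLs : sumR 2 l (fun s => (INR l - INR s) * n s) = INR l * N - SS).
  { unfold N, SS. transitivity (sumR 2 l (fun s => INR l * n s + -1 * (INR s * n s))).
    - apply sumR_ext; intros; ring.
    - rewrite sumR_lin; ring. }
  assert (HN0 : 0 <= N).
  { unfold N. rewrite <- (sumR_const0 2 l (fun _ => 0)) by auto. apply sumR_le. auto. }
  assert (HM0 : 0 <= M').
  { unfold M'. rewrite <- (sumR_const0 2 (r-1) (fun _ => 0)) by auto. apply sumR_le.
    intros; apply Hm; lia. }
  assert (Hmr : 0 <= mr) by (apply Hm; lia).
  assert (F4 : 2 * N <= SS).
  { unfold N, SS. replace (2 * sumR 2 l n) with (2 * sumR 2 l n + 0 * sumR 2 l n) by ring.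
    rewrite <- sumR_lin. apply sumR_le. intros i Hi.
    assert (INR 2 <= INR i) by (apply le_INR; lia). simpl in H.
    pose proof (Hn i Hi). nra. }
  assert (F2 : 2 * M' <= P).
  { unfold M', P. replace (2 * sumR 2 (r-1) m) with (2 * sumR 2 (r-1) m + 0 * sumR 2 (r-1) m) by ring.
    rewrite <- sumR_lin. apply sumR_le. intros i Hi.
    assert (INR 2 <= INR i) by (apply le_INR; lia). simpl in H.
    assert (0 <= m i) by (apply Hm; lia). nra. }
  rewrite HL, HM.
  rewrite HLs in Hc.
  assert (Hrr : 3 <= INR r) by (replace 3 with (INR 3) by (simpl; ring); apply le_INR; lia).
  assert (HDdef : D = 3 - INR l + INR l * kappa) by (unfold D; ring).
  assert (F1 : M' - SS + (3 - D) * N >= 0) by (rewrite HDdef; unfold M', SS, N in *; lra).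
  set (q := (2 + INR r) / D).
  assert (Hq : q * D = 2 + INR r) by (unfold q; field; lra).
  apply Rle_ge.
  assert (T : (2 + INR r) * (N + M' + mr) - D * (SS + INR r * N) >= 0).
  { destruct (Rle_lt_dec D (2 + INR r)) as [Hd|Hd].
    - assert (0 <= (2 + INR r - D) * (SS - 2 * N)) by (apply Rmult_le_pos; lra). nra.
    - assert (A : - SS - INR r * mr - 2 * (D - 3) * N >= 0) by nra.
      assert (0 <= D * (- SS - INR r * mr - 2 * (D - 3) * N)) by (apply Rmult_le_pos; lra).
      assert (0 <= D * INR r * mr) by (apply Rmult_le_pos; [nra|lra]).
      assert (0 <= ((D - INR r - 2) * (2 * D + INR r - 2) + INR r * INR r + INR r - 2) * N)
        by (apply Rmult_le_pos; nra).
      nra. }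
  assert (0 <= q * (N + M' + mr) - SS - INR r * N).
  { apply (Rmult_le_reg_l D); [lra|]. rewrite Rmult_0_r. nra. }
  nra.
Qed.
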